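(* For any $n\ge 1$ and any $u\in\mathsf{Tr}(n)$, $\mathrm{in}(u)+\mathrm{out}(u)=n$, where $\mathrm{in}(u)$ (resp. $\mathrm{out}(u)$) is the number of elements of $\mathsf{Tr}(n)$ covered by (resp. covering) $u$.
   Context: A triword of size $n$ is a word $u=u_1\cdots u_n$ with $u_i\in\{0,1,2\}$, $u_1\ne 2$, and such that $u_i=0$ implies $u_j\neq 1$ for all $j>i$; $\mathsf{Tr}(n)$ is their set, ordered componentwise ($u\preccurlyeq v$ iff $u_i\le v_i$ for all $i$). *)

(* Defs.v *)
From mathcomp Require Import all_boot.
Set Implicit Arguments. Unset Strict Implicit. Unset Printing Implicit Defensive.

(* Words of size n over {0,1,2}: n.-tuple 'I_3; letter u_i is tnth u i (0-indexed). *)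
Definition word n := n.-tuple 'I_3.

Definition triword n (u : word n) : bool :=
  (if n is _.+1 then nat_of_ord (nth ord0 u 0) != 2 else true) &&
  [forall i : 'I_n, forall j : 'I_n,
     ((i < j) && (nat_of_ord (tnth u i) == 0)) ==> (nat_of_ord (tnth u j) != 1)].

Definition wle n (u v : word n) : bool :=
  [forall i : 'I_n, nat_of_ord (tnth u i) <= nat_of_ord (tnth v i)].

Definition wlt n (u v : word n) : bool := (u != v) && wle u v.

Definition tcovers n (v u : word n) : bool :=
  [&& triword u, triword v, wlt u v &
      [forall w : word n, ~~ [&& triword w, wlt u w & wlt w v]]].

Definition tr_in n (u : word n) : nat := #|[pred v : word n | tcovers u v]|.
Definition tr_out n (u : word n) : nat := #|[pred v : word n | tcovers v u]|.

(* Main.v *)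
Require Import Defs.
From mathcomp Require Import all_boot zify.
Set Implicit Arguments. Unset Strict Implicit. Unset Printing Implicit Defensive.

Definition vl n (u : word n) (i : 'I_n) : nat := nat_of_ord (tnth u i).

Definition upd n (u : word n) (i : 'I_n) (c : 'I_3) : word n :=
  [tuple (if j == i then c else tnth u j) | j < n].

Lemma vl_upd n (u : word n) i c j : vl (upd u i c) j = if j == i then nat_of_ord c else vl u j.
Proof. by rewrite /vl /upd tnth_mktuple; case: (j == i). Qed.

Lemma word_eqP n (u v : word n) : reflect (forall i, vl u i = vl v i) (u == v).
Proof.
apply: (iffP eqP) => [-> //|H]; apply: eq_from_tnth => i; apply: val_inj; exact: H.
Qed.

Lemma wleP n (u v : word n) : reflect (forall i, vl u i <= vl v i) (wle u v).
Proof. exact: forallP. Qed.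

Lemma triwordP m (u : word m.+1) :
  reflect (vl u ord0 != 2 /\ forall i j : 'I_m.+1, i < j -> vl u i = 0 -> vl u j != 1) (triword u).
Proof.
rewrite /triword /vl (tnth_nth ord0) /=; apply: (iffP andP) => [[H1 /forallP H2]|[H1 H2]]; split => //.
- move=> i j lij ui; have /forallP/(_ j) := H2 i; by rewrite lij ui eqxx /=.
- apply/forallP => i; apply/forallP => j; apply/implyP => /andP[lij /eqP ui]. exact: (H2 i j lij ui).
Qed.

Lemma neq_exists n (u v : word n) : u != v -> exists i, vl u i != vl v i.
Proof.
move=> H; apply/existsP; apply: contraR H => /existsPn H; apply/word_eqP => i.
by apply/eqP; move: (H i); rewrite negbK.
Qed.

Lemma single m (u v : word m.+1) : triword u -> triword v -> wlt u v ->
  (forall w, ~~ [&& triword w, wlt u w & wlt w v]) -> exists i, v = upd u i (tnth v i).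
Proof.
move=> Tu Tv /andP[nuv /wleP luv] Hw.
have [i0 Hi0] := neq_exists nuv.
case: (@arg_minnP _ i0 (fun i => vl u i != vl v i) (fun i:'I_m.+1 => nat_of_ord i) Hi0) => i Pi Hmin.
set w := upd u i (tnth v i).
have Tw : triword w.
  move/triwordP: Tu => [U1 U2]; move/triwordP: Tv => [V1 V2].
  apply/triwordP; split.
    by rewrite vl_upd; case: ifP => // /eqP <-.
  move=> j k ljk; rewrite !vl_upd.
  case: (j =P i) => [ji|nji]; case: (k =P i) => [ki|nki].
  - by move: ljk; rewrite ji ki ltnn.
  - move=> v0; have := luv i; move: Pi; rewrite /vl -ji in v0 *; lia.
  - move=> uj; apply/negP => /eqP vi.
    have vj : vl v j != 0 by apply/eqP => vj0; have := V2 j k ljk vj0; rewrite /vl ki vi.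
    have := Hmin j; rewrite uj eq_sym vj => /(_ isT); move: ljk; rewrite ki; lia.
  - exact: U2.
have lwv : wle w v by apply/wleP => j; rewrite vl_upd; case: (j =P i) => [->|_] //.
have luw : wle u w by apply/wleP => j; rewrite vl_upd; case: (j =P i) => [->|_] //; rewrite /vl.
case: (w =P v) => [Ewv|nwv]; first by exists i.
have := Hw w; rewrite Tw /wlt lwv luw andbT (introN eqP nwv) /= andbT.
suff -> : u != w by [].
apply: contra Pi => /eqP ->; by rewrite vl_upd eqxx.
Qed.

Lemma upd_sym n (u v : word n) i : v = upd u i (tnth v i) -> u = upd v i (tnth u i).
Proof.
move=> E; apply/eqP/word_eqP => j; rewrite vl_upd; case: (j =P i) => [->|nji] //.
by rewrite E vl_upd (introF eqP nji).
Qed.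

Lemma upd_upd n (u : word n) i c d : upd (upd u i c) i d = upd u i d.
Proof. apply/eqP/word_eqP => j; rewrite !vl_upd; by case: (j == i). Qed.

Lemma up_cover m (x y : word m.+1) i : triword x -> triword y -> y = upd x i (tnth y i) ->
  vl x i < vl y i -> (forall d : 'I_3, vl x i < d < vl y i -> ~~ triword (upd x i d)) ->
  tcovers y x.
Proof.
move=> Tx Ty Ey lxy Hd.
have lexy : wle x y.
  apply/wleP => j; rewrite Ey vl_upd; case: (j =P i) => [->|_] //; exact: ltnW.
have nxy : x != y by apply/eqP => Exy; move: lxy; rewrite Exy ltnn.
rewrite /tcovers Tx Ty /wlt nxy lexy /=.
apply/forallP => w; apply/negP => /and3P[Tw /andP[nxw /wleP lxw] /andP[nwy /wleP lwy]].
have Ew : w = upd x i (tnth w i).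
  apply/eqP/word_eqP => j; rewrite vl_upd; case: (j =P i) => [->|nji] //.
  have := lxw j; have := lwy j; rewrite Ey vl_upd (introF eqP nji); lia.
have h1 := lxw i; have h2 := lwy i.
case: (ltngtP (vl x i) (vl w i)) => [c1|c1|c1]; last first.
- move: nxw; rewrite Ew; suff -> : upd x i (tnth w i) = x by rewrite eqxx.
  apply/eqP/word_eqP => j; rewrite vl_upd; case: (j =P i) => [->|] //; by rewrite c1.
- lia.
case: (ltngtP (vl w i) (vl y i)) => [c2|c2|c2]; last first.
- move: nwy; rewrite Ew Ey; suff -> : upd x i (tnth w i) = upd x i (tnth y i) by rewrite eqxx.
  apply/eqP/word_eqP => j; rewrite !vl_upd; case: ifP => // _; by rewrite -c2.
- lia.
have := Hd (tnth w i); rewrite -/(vl w i) c1 c2 -Ew Tw; by move/(_ isT).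
Qed.

Lemma mid n (x y : word n) i (d : 'I_3) : y = upd x i (tnth y i) -> vl x i < d < vl y i ->
  wlt x (upd x i d) && wlt (upd x i d) y.
Proof.
move=> Ey /andP[h1 h2]; rewrite /wlt; apply/andP; split; apply/andP; split.
- apply/eqP => E; move: h1; by rewrite E vl_upd eqxx ltnn.
- apply/wleP => j; rewrite vl_upd; case: (j =P i) => [->|] //; exact: ltnW.
- apply/eqP => E; move: h2; by rewrite -E vl_upd eqxx ltnn.
- apply/wleP => j; rewrite Ey !vl_upd; case: (j =P i) => // _; exact: ltnW.
Qed.

Lemma wle_antisym n (u v : word n) : wle u v -> wle v u -> u = v.
Proof. move=> /wleP h1 /wleP h2; apply/eqP/word_eqP => j; have := h1 j; have := h2 j; lia. Qed.

Lemma nbr_form m (u v : word m.+1) : triword u -> (tcovers v u || tcovers u v) ->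
  exists i, [/\ v = upd u i (tnth v i), vl v i != vl u i, triword v &
    forall d : 'I_3, (vl u i < d < vl v i) || (vl v i < d < vl u i) -> ~~ triword (upd u i d)].
Proof.
move=> Tu; rewrite /tcovers => /orP[] /and4P[T1 T2 W /forallP Hw].
- have [i Ev] := single T1 T2 W (fun w => Hw w).
  move: W => /andP[nuv /wleP luv].
  exists i; split => //.
    apply: contra nuv => /eqP E; apply/word_eqP => j; rewrite Ev vl_upd; case: (j =P i) => [->|] //.
  move=> d /orP[] hd; last by have := luv i; move: hd; lia.
  apply/negP => Tw; have := Hw (upd u i d); by rewrite Tw (mid Ev hd).
- have [i Eu] := single T1 T2 W (fun w => Hw w).
  have Ev := upd_sym Eu.
  move: W => /andP[nuv /wleP luv].
  exists i; split => //.
    apply: contra nuv => /eqP E; apply/word_eqP => j; rewrite Eu vl_upd; case: (j =P i) => [->|] //.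
  move=> d /orP[] hd; first by have := luv i; move: hd; lia.
  apply/negP => Tw; have Ew : upd u i d = upd v i d by rewrite {1}Eu upd_upd.
  rewrite Ew in Tw; have := Hw (upd v i d); by rewrite Tw (mid Eu hd).
Qed.

Lemma tnth_upd_eq n (u : word n) i c : tnth (upd u i c) i = c.
Proof. by rewrite /upd tnth_mktuple eqxx. Qed.

Lemma upd_id n (u : word n) i : upd u i (tnth u i) = u.
Proof. apply/eqP/word_eqP => j; rewrite vl_upd; by case: (j =P i) => [->|]. Qed.

Lemma cover_of m (u : word m.+1) i (c : 'I_3) : triword u -> triword (upd u i c) ->
  (forall d : 'I_3, (vl u i < d < c) || (c < d < vl u i) -> ~~ triword (upd u i d)) ->
  c != vl u i :> nat ->
  tcovers (upd u i c) u || tcovers u (upd u i c).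
Proof.
move=> Tu Tc Hd ne.
case: (ltngtP (vl u i) c) => [h|h|h]; last by rewrite h eqxx in ne.
- apply/orP; left; apply: (up_cover (i := i)) => //.
  + by rewrite tnth_upd_eq.
  + by rewrite vl_upd eqxx.
  + move=> d; rewrite vl_upd eqxx => hd; apply: Hd; by rewrite hd.
- apply/orP; right; apply: (up_cover (i := i)) => //.
  + by rewrite upd_upd upd_id.
  + by rewrite vl_upd eqxx.
  + move=> d; rewrite vl_upd eqxx upd_upd => hd; apply: Hd; by rewrite hd orbT.
Qed.

Lemma eq_upd n (u : word n) i (c d : 'I_3) : c = d :> nat -> upd u i c = upd u i d.
Proof. by move=> E; apply/eqP/word_eqP => j; rewrite !vl_upd E. Qed.

Lemma triword_upd m (u : word m.+1) (i : 'I_m.+1) (c : 'I_3) : triword u ->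
  (i = ord0 -> c != 2 :> nat) ->
  (c = 0 :> nat -> forall l : 'I_m.+1, i < l -> vl u l != 1) ->
  (c = 1 :> nat -> forall k : 'I_m.+1, k < i -> vl u k != 0) -> triword (upd u i c).
Proof.
move=> /triwordP[U1 U2] H2 H0 H1; apply/triwordP; split.
  rewrite vl_upd; case: (ord0 =P i) => [E|] //; exact: H2.
move=> j k ljk; rewrite !vl_upd.
case: (j =P i) => [ji|nji]; case: (k =P i) => [ki|nki].
- by move: ljk; rewrite ji ki ltnn.
- move=> c0; apply: H0 => //; by rewrite -ji.
- move=> uj; apply/eqP => c1; have := H1 c1 j; rewrite -ki ljk uj => /(_ isT); by rewrite eqxx.
- exact: U2.
Qed.

Lemma not_tri1 m (u : word m.+1) (i k : 'I_m.+1) (c : 'I_3) : k < i -> vl u k = 0 -> c = 1 :> nat ->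
  ~~ triword (upd u i c).
Proof.
move=> lki uk c1; have nki : (k == i) = false by apply/eqP => E; rewrite E ltnn in lki.
apply/negP => /triwordP[_ H]; have := H k i lki.
rewrite !vl_upd eqxx nki uk c1 => /(_ erefl); by rewrite eqxx.
Qed.

Definition zb m (u : word m.+1) (i : 'I_m.+1) : bool := [exists j : 'I_m.+1, (j < i) && (vl u j == 0)].

Lemma zbP m (u : word m.+1) (i : 'I_m.+1) : reflect (exists2 k : 'I_m.+1, k < i & vl u k = 0) (zb u i).
Proof.
apply: (iffP existsP) => [[k /andP[h /eqP e]]|[k h e]]; first by exists k.
by exists k; rewrite h e.
Qed.

Lemma zb_no1 m (u : word m.+1) (i l : 'I_m.+1) : triword u -> zb u i -> i < l -> vl u l != 1.
Proof.
move=> /triwordP[_ H] /zbP[k lki uk] lil; apply: (H k l) => //; exact: ltn_trans lki lil.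
Qed.

Lemma zb_ne0 m (u : word m.+1) (i : 'I_m.+1) : zb u i -> i != ord0.
Proof. move=> /zbP[k lki _]; apply/eqP => E; by rewrite E in lki. Qed.

Definition Lpos m (u : word m.+1) : 'I_m.+1 := [arg max_(j > ord0 | vl u j == 1) nat_of_ord j].

Lemma LposP m (u : word m.+1) : vl u ord0 = 1 ->
  vl u (Lpos u) = 1 /\ forall k : 'I_m.+1, vl u k = 1 -> k <= Lpos u.
Proof.
move=> h; rewrite /Lpos; case: (@arg_maxnP _ ord0 (fun j => vl u j == 1) (fun j => nat_of_ord j)).
  by apply/eqP.
move=> l /eqP Hl Hmax; split => // k /eqP; exact: Hmax.
Qed.

Definition spec m (u : word m.+1) j := (j == ord0) && (vl u j == 1).
Definition pos m (u : word m.+1) j := if spec u j then Lpos u else j.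
Definition ncv m (u : word m.+1) j : nat :=
  if vl u j == 0 then (if zb u j then 2 else 1)
  else if vl u j == 2 then (if zb u j then 0 else 1)
  else if j == ord0 then 0 else 2.
Definition g m (u : word m.+1) j := upd u (pos u j) (inord (ncv u j)).

Lemma inord_ncv m (u : word m.+1) j : nat_of_ord (inord (ncv u j) : 'I_3) = ncv u j.
Proof. apply: inordK; rewrite /ncv; by repeat case: ifP. Qed.

Lemma vl3 n (u : word n) j : [\/ vl u j = 0, vl u j = 1 | vl u j = 2].
Proof.
have := ltn_ord (tnth u j); rewrite -/(vl u j).
case: (vl u j) => [|[|[|k]]] h; [exact: Or31|exact: Or32|exact: Or33|done].
Qed.

Lemma g_nbr m (u : word m.+1) j : triword u -> tcovers (g u j) u || tcovers u (g u j).
Proof.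
move=> Tu; rewrite /g; have cv := inord_ncv u j.
move: (inord (ncv u j) : 'I_3) cv => c cv.
case: (vl3 u j) => [a0|a1|a2].
- have ps : pos u j = j by rewrite /pos /spec a0 andbF.
  rewrite ps; rewrite /ncv a0 /= in cv.
  case: (boolP (zb u j)) => z; rewrite ?z ?(negbTE z) in cv; apply: cover_of => //.
  + apply: triword_upd => //; [by move=> E; move: (zb_ne0 z); rewrite E eqxx | by rewrite cv | by rewrite cv].
  + move=> d; rewrite cv a0 => /orP[] /andP[h1 h2]; last by [].
    case/zbP: (z) => k lk uk; apply: (not_tri1 lk uk); lia.
  + by rewrite cv a0.
  + apply: triword_upd => //; [by rewrite cv | by rewrite cv |].
    move=> _ k lk; apply/eqP => uk; move: z; have -> // : zb u j by apply/zbP; exists k.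
  + move=> d; rewrite cv a0 => /orP[] /andP[h1 h2]; lia.
  + by rewrite cv a0.
- case: (boolP (j == ord0)) => j0.
  + have ps : pos u j = Lpos u by rewrite /pos /spec a1 j0.
    have a10 : vl u ord0 = 1 by rewrite -(eqP j0).
    have [L1 Lm] := LposP a10.
    rewrite ps; rewrite /ncv a1 j0 /= in cv.
    apply: cover_of => //.
    * apply: triword_upd => //; [by rewrite cv | | by rewrite cv].
      move=> _ l ll; apply/eqP => ul; have := Lm l ul; lia.
    * move=> d; rewrite cv L1 => /orP[] /andP[h1 h2]; lia.
    * by rewrite cv L1.
  + have ps : pos u j = j by rewrite /pos /spec (negbTE j0).
    rewrite ps; rewrite /ncv a1 (negbTE j0) /= in cv.
    apply: cover_of => //.
    * apply: triword_upd => //; [by move=> E; rewrite E eqxx in j0 | by rewrite cv | by rewrite cv].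
    * move=> d; rewrite cv a1 => /orP[] /andP[h1 h2]; lia.
    * by rewrite cv a1.
- have ps : pos u j = j by rewrite /pos /spec a2 andbF.
  rewrite ps; rewrite /ncv a2 /= in cv.
  case: (boolP (zb u j)) => z; rewrite ?z ?(negbTE z) in cv; apply: cover_of => //.
  + apply: triword_upd => //; [by rewrite cv | | by rewrite cv].
    move=> _ l ll; exact: zb_no1 Tu z ll.
  + move=> d; rewrite cv a2 => /orP[] /andP[h1 h2]; first by [].
    case/zbP: (z) => k lk uk; apply: (not_tri1 lk uk); lia.
  + by rewrite cv a2.
  + apply: triword_upd => //; [by rewrite cv | by rewrite cv |].
    move=> _ k lk; apply/eqP => uk; move: z; have -> // : zb u j by apply/zbP; exists k.
  + move=> d; rewrite cv a2 => /orP[] /andP[h1 h2]; lia.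
  + by rewrite cv a2.
Qed.

Lemma g_eq m (u v : word m.+1) i j : v = upd u i (tnth v i) -> pos u j = i -> ncv u j = vl v i ->
  v = g u j.
Proof.
move=> Ev ps nc; rewrite /g {1}Ev; apply/eqP/word_eqP => k; by rewrite !vl_upd ps inord_ncv nc.
Qed.

Lemma nbr_g m (u v : word m.+1) : triword u -> (tcovers v u || tcovers u v) -> exists j, v = g u j.
Proof.
move=> Tu /(nbr_form Tu) [i [Ev ne Tv Hb]].
move/triwordP: (Tv) => [V1 V2]; move/triwordP: (Tu) => [U1 U2].
have vk : forall k, k != i -> vl v k = vl u k by move=> k nk; rewrite Ev vl_upd (negbTE nk).
have nz1 : vl v i = 1 -> ~~ zb u i.
  move=> c1; apply/negP => /zbP[k lk uk].
  have nk : k != i by apply/eqP => E; rewrite E ltnn in lk.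
  by have := V2 k i lk; rewrite vk // uk c1 => /(_ erefl).
have zz : vl u i != 1 -> vl v i != 1 -> zb u i.
  move=> h1 h2; case: (boolP (zb u i)) => // nz; exfalso.
  have := Hb (inord 1); rewrite inordK //.
  have -> : (vl u i < 1 < vl v i) || (vl v i < 1 < vl u i).
    move: ne h1 h2; have := vl3 u i; have := vl3 v i; case=> -> [] -> //.
  move/(_ isT)/negP; apply; apply: triword_upd => //; rewrite inordK //.
  move=> _ k lk; apply/eqP => uk; move/negP: nz; apply; apply/zbP; by exists k.
have psi : vl u i != 1 -> pos u i = i by move=> h; rewrite /pos /spec (negbTE h) andbF.
case: (vl3 u i) => ha; case: (vl3 v i) => hc; move: ne; rewrite ha hc // => _.
- exists i; apply: (g_eq Ev); first by rewrite psi ?ha.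
  by rewrite /ncv ha hc /= (negbTE (nz1 hc)).
- exists i; apply: (g_eq Ev); first by rewrite psi ?ha.
  by rewrite /ncv ha hc /= zz ?ha ?hc.
- exists ord0.
  have u0 : vl u ord0 = 1.
    case: (vl3 u ord0) => // b.
    + case: (i =P ord0) => [E|/eqP nE]; first by rewrite -E ha in b.
      have := U2 ord0 i; rewrite b ha => /(_ _ erefl); rewrite lt0n; move/(_ nE); by rewrite eqxx.
    + by move: U1; rewrite b.
  have [L1 Lm] := LposP u0.
  have Li : Lpos u = i.
    apply: val_inj; apply/eqP; rewrite eqn_leq Lm // andbT leqNgt; apply/negP => lt.
    have nL : Lpos u != i by apply/eqP => E; rewrite E ltnn in lt.
    by have := V2 i (Lpos u) lt hc; rewrite vk // L1.
  apply: (g_eq Ev); first by rewrite /pos /spec eqxx u0 /= Li.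
  by rewrite /ncv u0 hc /= ?eqxx.
- have i0 : i != ord0 by apply/eqP => E; move: V1; rewrite -E hc.
  exists i; apply: (g_eq Ev); first by rewrite /pos /spec (negbTE i0).
  by rewrite /ncv ha hc /= (negbTE i0).
- exists i; apply: (g_eq Ev); first by rewrite psi ?ha.
  by rewrite /ncv ha hc /= zz ?ha ?hc.
- exists i; apply: (g_eq Ev); first by rewrite psi ?ha.
  by rewrite /ncv ha hc /= (negbTE (nz1 hc)).
Qed.

Lemma nbr_neq n (u v : word n) : tcovers v u || tcovers u v -> v != u.
Proof.
rewrite /tcovers => /orP[] /and4P[_ _ /andP[h _] _]; first by rewrite eq_sym.
exact: h.
Qed.

Lemma spec_case m (u : word m.+1) j1 j2 : spec u j1 -> ~~ spec u j2 -> pos u j1 = pos u j2 ->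
  ncv u j1 = ncv u j2 -> j1 = j2.
Proof.
move=> /andP[/eqP e1 /eqP u1] s2; rewrite /pos e1 (negbTE s2).
have u0 : vl u ord0 = 1 by rewrite -e1.
have [L1 _] := LposP u0.
rewrite /spec in s2.
case: (j2 =P ord0) => [->|/eqP n2] // L2.
move: L2; rewrite /spec eqxx u0 /= => L2; rewrite L2 in L1; rewrite /ncv u0 L1 /= (negbTE n2) //.
Qed.

Lemma g_inj m (u : word m.+1) : triword u -> injective (g u).
Proof.
move=> Tu j1 j2 E.
have d1 := nbr_neq (g_nbr j1 Tu).
have gv : forall j k, vl (g u j) k = if k == pos u j then ncv u j else vl u k.
  by move=> j k; rewrite /g vl_upd inord_ncv.
have p : pos u j1 = pos u j2.
  apply/eqP; apply: contraR d1 => np; apply/word_eqP => k; rewrite gv.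
  case: (k =P pos u j1) => [->|] //.
  by have := gv j2 (pos u j1); rewrite -E gv eqxx (negbTE np).
have cc : ncv u j1 = ncv u j2.
  have h1 := gv j1 (pos u j1); have h2 := gv j2 (pos u j1); rewrite -E in h2.
  rewrite p eqxx in h1; rewrite p eqxx in h2; by rewrite -h1 -h2.
case: (boolP (spec u j1)) => s1; case: (boolP (spec u j2)) => s2.
- by move: s1 s2 => /andP[/eqP -> _] /andP[/eqP -> _].
- exact: spec_case s1 s2 p cc.
- by apply/esym; apply: spec_case s2 s1 (esym p) (esym cc).
- by move: p; rewrite /pos (negbTE s1) (negbTE s2).
Qed.

Theorem lemma3p4 (n : nat) (u : word n) :
  1 <= n -> triword u -> tr_in u + tr_out u = n.
Proof.
case: n u => [|m] u // _ Tu.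
rewrite /tr_in /tr_out -cardUI.
rewrite (eq_card0 (A := [predI _ & _])); last first.
  move=> v; rewrite !inE; apply/negP => /andP[h1 h2].
  move: h1 h2; rewrite /tcovers => /and4P[_ _ /andP[_ l1] _] /and4P[_ _ /andP[n2 l2] _].
  by move: n2; rewrite (wle_antisym l1 l2) eqxx.
rewrite addn0 -[RHS]card_ord -(card_codom (g_inj Tu)); apply: eq_card => v; rewrite !inE.
apply/idP/codomP.
- by move=> h; apply: nbr_g => //; rewrite orbC.
- by move=> [j ->]; rewrite orbC; apply: g_nbr.
Qed.
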